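(* Under the assumptions below, with $\varrho=h^{2\alpha}$, let $y_{\varrho h}\in Y_h$ be the Galerkin solution, let $\widetilde{u}_{\varrho h}\in U_h$ be the unique solution of $\langle\widetilde{u}_{\varrho h},x_h\rangle_{X^*,X}=\langle By_{\varrho h},x_h\rangle_{X^*,X}$ for all $x_h\in X_h$, and let $\widetilde{y}_\varrho:=B^{-1}\widetilde{u}_{\varrho h}\in Y$. Then there is a constant $c>0$ independent of $h$ and $\overline{y}$ such that $$\|\widetilde{y}_\varrho-\overline{y}\|_{H_Y}\le c\,\|\overline{y}\|_{H_Y}\quad\text{for }\overline{y}\in H_Y,\qquad \|\widetilde{y}_\varrho-\overline{y}\|_{H_Y}\le c\,h^\alpha\|\overline{y}\|_Y\quad\text{for }\overline{y}\in Y.$$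
   Context: Abstract setting: Let $X\subset H_X\subset X^*$ and $Y\subset H_Y\subset Y^*$ be Gelfand triples of real Hilbert spaces, where the duality pairings $\langle\cdot,\cdot\rangle_{X^*,X}$ and $\langle\cdot,\cdot\rangle_{Y^*,Y}$ extend the inner products of $H_X$, $H_Y$. Let $B:Y\to X^*$ be a bounded linear isomorphism with adjoint $B^*:X\to Y^*$, $\langle By,x\rangle_{X^*,X}=\langle y,B^*x\rangle_{Y,Y^*}$. Let $D:Y\to Y^*$ be bounded, linear, self-adjoint and elliptic, $\|y\|_D:=\langle Dy,y\rangle_{Y^*,Y}^{1/2}$ (an equivalent norm on $Y$). Given $\overline{y}\in H_Y$ and $\varrho>0$, $y_\varrho\in Y$ is the unique solution of $\langle y_\varrho,y\rangle_{H_Y}+\varrho\langle Dy_\varrho,y\rangle_{Y^*,Y}=\langle\overline{y},y\rangle_{H_Y}$ for all $y\in Y$. Discretization: for each $h\in(0,h_0]$, $Y_h\subset Y$ is finite-dimensional and there are maps $P_h:Y\to Y_h$, $\alpha>0$ and $c_1,c_2>0$ independent of $h$ with $\|y-P_hy\|_{H_Y}\le c_1h^\alpha\|y\|_D$ and $\|y-P_hy\|_D\le c_2\|y\|_D$ for all $y\in Y$; $y_{\varrho h}\in Y_h$ satisfies $\langle y_{\varrho h},y_h\rangle_{H_Y}+\varrho\langle Dy_{\varrho h},y_h\rangle_{Y^*,Y}=\langle\overline{y},y_h\rangle_{H_Y}$ for all $y_h\in Y_h$. Further, $U_h\subset X^*$ and $X_h\subset X$ are finite-dimensional subspaces with $\dim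 U_h=\dim X_h$, satisfying the discrete inf-sup condition $c_S\|u_h\|_{X^*}\le\sup_{0\ne x_h\in X_h}\langle u_h,x_h\rangle_{X^*,X}/\|x_h\|_X$ for all $u_h\in U_h$ with $c_S>0$ independent of $h$, and there are maps $\Pi_h:X\to X_h$ with $\|x-\Pi_hx\|_X\le c\,h^\alpha\|B^*x\|_{H_Y}$ for all $x\in X$ with $B^*x\in H_Y$, $c$ independent of $h$. *)

(* Defs.v *)
From HB Require Import structures.
From mathcomp Require Import all_boot all_order all_algebra.
From mathcomp Require Import all_classical all_reals all_analysis.
Set Implicit Arguments. Unset Strict Implicit. Unset Printing Implicit Defensive.
Import Order.TTheory GRing.Theory Num.Theory.
Local Open Scope classical_set_scope.
Local Open Scope ring_scope.

Section Defs.
Variable R : realType.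

Section Hilbert.
Variable V : lmodType R.
Variable ip : V -> V -> R.

Definition is_inner_product : Prop :=
  [/\ (forall x y, ip x y = ip y x),
      (forall a x y z, ip (a *: x + y) z = a * ip x z + ip y z),
      (forall x, 0 <= ip x x) &
      (forall x, ip x x = 0 -> x = 0)].

Definition hnorm (x : V) : R := Num.sqrt (ip x x).

Definition hcomplete : Prop :=
  forall u : nat -> V,
    (forall e : R, 0 < e -> exists N : nat, forall m n : nat,
        (N <= m)%N -> (N <= n)%N -> hnorm (u m - u n) < e) ->
    exists l : V, forall e : R, 0 < e -> exists N : nat, forall n : nat,
        (N <= n)%N -> hnorm (u n - l) < e.

Definition is_hilbert : Prop := is_inner_product /\ hcomplete.

Definition bounded_linear_functional (f : V -> R) : Prop :=
  (forall a x y, f (a *: x + y) = a * f x + f y) /\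
  exists C : R, forall x, `|f x| <= C * hnorm x.

Definition dual_norm (f : V -> R) : R :=
  sup [set r | exists x : V, x != 0 /\ r = `|f x| / hnorm x].

Definition subspace_dim (S : set V) (n : nat) : Prop :=
  exists b : 'I_n -> V,
    S = [set v | exists a : 'I_n -> R, v = \sum_(i < n) a i *: b i] /\
    (forall a : 'I_n -> R, \sum_(i < n) a i *: b i = 0 -> forall i, a i = 0).

Definition fun_subspace_dim (S : set (V -> R)) (n : nat) : Prop :=
  exists b : 'I_n -> (V -> R),
    S = [set f | exists a : 'I_n -> R, forall x, f x = \sum_(i < n) a i * b i x] /\
    (forall a : 'I_n -> R, (forall x, \sum_(i < n) a i * b i x = 0) ->
       forall i, a i = 0).
End Hilbert.

(* Gelfand triple  V ⊂ H ⊂ V^* : V is continuously and densely embedded in H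
   via the injective linear map i; H is identified with its dual, and
   h ∈ H acts on V by  x |-> ipH h (i x)  (so the duality pairing extends the
   inner product of H). *)
Definition gelfand_triple (V H : lmodType R) (ipV : V -> V -> R)
    (ipH : H -> H -> R) (i : V -> H) : Prop :=
  [/\ is_hilbert ipV /\ is_hilbert ipH,
      (forall a x y, i (a *: x + y) = a *: i x + i y),
      injective i,
      (exists C : R, forall x, hnorm ipH (i x) <= C * hnorm ipV x) &
      (forall h : H, forall e : R, 0 < e -> exists x : V, hnorm ipH (i x - h) < e)].

Definition bounded_iso_to_dual (Y X : lmodType R) (ipY : Y -> Y -> R)
    (ipX : X -> X -> R) (B : Y -> X -> R) : Prop :=
  [/\ (forall y, bounded_linear_functional ipX (B y)) /\
      (forall a y z x, B (a *: y + z) x = a * B y x + B z x),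
      (exists C : R, forall y, dual_norm ipX (B y) <= C * hnorm ipY y),
      (exists c : R, 0 < c /\ forall y, c * hnorm ipY y <= dual_norm ipX (B y)),
      injective B &
      (forall f, bounded_linear_functional ipX f -> exists y, forall x, f x = B y x)].

(* D : Y -> Y^*, written as the bilinear form d y z = <D y, z>:
   bounded, linear, self-adjoint and elliptic *)
Definition sym_elliptic_form (Y : lmodType R) (ipY : Y -> Y -> R)
    (d : Y -> Y -> R) : Prop :=
  [/\ (forall a x y z, d (a *: x + y) z = a * d x z + d y z),
      (forall y z, d y z = d z y),
      (exists C : R, forall y z, `|d y z| <= C * hnorm ipY y * hnorm ipY z) &
      (exists c : R, 0 < c /\ forall y, c * hnorm ipY y ^+ 2 <= d y y)].

Definition Dnorm (Y : lmodType R) (d : Y -> Y -> R) (y : Y) : R := Num.sqrt (d y y).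

End Defs.

(* Main.v *)
Require Import Defs.
From HB Require Import structures.
From mathcomp Require Import all_boot all_order all_algebra.
From mathcomp Require Import all_classical all_reals all_analysis.
From mathcomp Require Import ring lra.
Import Order.TTheory GRing.Theory Num.Theory.
Local Open Scope classical_set_scope.
Local Open Scope ring_scope.
Set Implicit Arguments. Unset Strict Implicit. Unset Printing Implicit Defensive.

Lemma ipDl (R : realType) (V : lmodType R) (ip : V -> V -> R) :
  is_inner_product ip -> forall x y z, ip (x + y) z = ip x z + ip y z.
Proof. rewrite /is_inner_product => -[_ L _ _] x y z; by have := L 1 x y z; rewrite scale1r mul1r. Qed.

Lemma ip0l (R : realType) (V : lmodType R) (ip : V -> V -> R) :
  is_inner_product ip -> forall z, ip 0 z = 0.
Proof.
move=> H z; have := ipDl H 0 0 z; rewrite addr0 => E.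
by apply/eqP; rewrite -(subrr (ip 0 z)) {2}E addrK.
Qed.

Lemma ipZl (R : realType) (V : lmodType R) (ip : V -> V -> R) :
  is_inner_product ip -> forall a x z, ip (a *: x) z = a * ip x z.
Proof.
move=> H a x z; case: (H) => _ L _ _.
by rewrite -[a *: x]addr0 L (ip0l H) addr0.
Qed.

Lemma ipNl (R : realType) (V : lmodType R) (ip : V -> V -> R) :
  is_inner_product ip -> forall x z, ip (- x) z = - ip x z.
Proof. by move=> H x z; rewrite -scaleN1r (ipZl H) mulN1r. Qed.

Lemma ipBl (R : realType) (V : lmodType R) (ip : V -> V -> R) :
  is_inner_product ip -> forall x y z, ip (x - y) z = ip x z - ip y z.
Proof. by move=> H x y z; rewrite (ipDl H) (ipNl H). Qed.

Lemma ipC (R : realType) (V : lmodType R) (ip : V -> V -> R) :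
  is_inner_product ip -> forall x y, ip x y = ip y x.
Proof. by case. Qed.

Lemma ipDr (R : realType) (V : lmodType R) (ip : V -> V -> R) :
  is_inner_product ip -> forall x y z, ip z (x + y) = ip z x + ip z y.
Proof. by move=> H x y z; rewrite !(ipC H z) ipDl. Qed.

Lemma ipBr (R : realType) (V : lmodType R) (ip : V -> V -> R) :
  is_inner_product ip -> forall x y z, ip z (x - y) = ip z x - ip z y.
Proof. by move=> H x y z; rewrite !(ipC H z) ipBl. Qed.

Lemma ipZr (R : realType) (V : lmodType R) (ip : V -> V -> R) :
  is_inner_product ip -> forall a x z, ip z (a *: x) = a * ip z x.
Proof. by move=> H a x z; rewrite !(ipC H z) ipZl. Qed.

Lemma ip0r (R : realType) (V : lmodType R) (ip : V -> V -> R) :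
  is_inner_product ip -> forall z, ip z 0 = 0.
Proof. by move=> H z; rewrite (ipC H) (ip0l H). Qed.

Lemma ipxx_ge0 (R : realType) (V : lmodType R) (ip : V -> V -> R) :
  is_inner_product ip -> forall x, 0 <= ip x x.
Proof. by case. Qed.

Lemma hnorm_ge0 (R : realType) (V : lmodType R) (ip : V -> V -> R) x :
  0 <= hnorm ip x.
Proof. exact: sqrtr_ge0. Qed.

Lemma hnorm_sq (R : realType) (V : lmodType R) (ip : V -> V -> R) :
  is_inner_product ip -> forall x, hnorm ip x ^+ 2 = ip x x.
Proof. by move=> H x; rewrite sqr_sqrtr // ipxx_ge0. Qed.

Lemma CS2 (R : realType) (V : lmodType R) (ip : V -> V -> R) :
  is_inner_product ip -> forall x y, ip x y ^+ 2 <= ip x x * ip y y.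
Proof.
move=> H x y.
have [a0|an0] := eqVneq (ip x x) 0.
  by case: (H) => _ _ _ D; rewrite (D _ a0) (ip0l H) expr0n /= mulr_ge0 // ipxx_ge0.
have ap : 0 < ip x x by rewrite lt0r an0 ipxx_ge0.
have P := ipxx_ge0 H ((- (ip x y / ip x x)) *: x + y).
rewrite !(ipDl H, ipDr H, ipZl H, ipZr H) (ipC H y x) in P.
have E : - (ip x y / ip x x) * (- (ip x y / ip x x) * ip x x) +
  - (ip x y / ip x x) * ip x y + (- (ip x y / ip x x) * ip x y + ip y y) = (ip x x * ip y y - ip x y ^+ 2) / ip x x.
  by field.
rewrite E pmulr_lge0 ?invr_gt0 // subr_ge0 in P.
by [].
Qed.

Lemma CS (R : realType) (V : lmodType R) (ip : V -> V -> R) :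
  is_inner_product ip -> forall x y, `|ip x y| <= hnorm ip x * hnorm ip y.
Proof.
move=> H x y; rewrite /hnorm -sqrtrM ?ipxx_ge0 // -sqrtr_sqr ler_sqrt.
  exact: CS2.
by rewrite mulr_ge0 ?ipxx_ge0.
Qed.

Lemma hnormD (R : realType) (V : lmodType R) (ip : V -> V -> R) :
  is_inner_product ip -> forall x y, hnorm ip (x + y) <= hnorm ip x + hnorm ip y.
Proof.
move=> H x y.
rewrite -(ler_pXn2r (n:=2)) ?nnegrE ?addr_ge0 ?hnorm_ge0 //.
rewrite (hnorm_sq H) (ipDl H) !(ipDr H) (ipC H y x) -!(hnorm_sq H).
have := CS H x y; have := hnorm_ge0 ip x; have := hnorm_ge0 ip y.
move=> h1 h2 h3; have h4 := ler_norm (ip x y).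
rewrite sqrrD -mulr_natr; lra.
Qed.

Lemma hnorm0 (R : realType) (V : lmodType R) (ip : V -> V -> R) :
  is_inner_product ip -> forall x, hnorm ip x = 0 -> x = 0.
Proof.
move=> H x E; case: (H) => _ _ _ D; apply: D.
by rewrite -(hnorm_sq H) E expr0n.
Qed.

Lemma ipNr (R : realType) (V : lmodType R) (ip : V -> V -> R) :
  is_inner_product ip -> forall x z, ip z (- x) = - ip z x.
Proof. by move=> H x z; rewrite (ipC H) (ipNl H) (ipC H). Qed.
Lemma hnorm_gt0 (R : realType) (V : lmodType R) (ip : V -> V -> R) :
  is_inner_product ip -> forall x, x != 0 -> 0 < hnorm ip x.
Proof.
move=> H x nx; rewrite lt0r hnorm_ge0 andbT; apply/eqP => E.
by move/eqP: nx; apply; apply: hnorm0 E.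
Qed.

Lemma blf0 (R : realType) (V : lmodType R) (ip : V -> V -> R) (f : V -> R) :
  bounded_linear_functional ip f -> f 0 = 0.
Proof.
move=> [L _]; have := L 1 0 0; rewrite scaler0 addr0 mul1r => E.
by apply/eqP; rewrite -(subrr (f 0)) {2}E addrK.
Qed.

Lemma dual_norm_le (R : realType) (V : lmodType R) (ip : V -> V -> R) (f : V -> R) M :
  0 <= M -> (forall x, `|f x| <= M * hnorm ip x) -> dual_norm ip f <= M.
Proof.
move=> M0 Hf; rewrite /dual_norm.
have [ne|e] := pselect ([set r | exists x : V, x != 0 /\ r = `|f x| / hnorm ip x] !=set0).
  apply: ge_sup => // r [x [nx ->]].
  have [n0|np] := eqVneq (hnorm ip x) 0.
    by rewrite n0 invr0 mulr0.
  have npos : 0 < hnorm ip x by rewrite lt0r np hnorm_ge0.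
  by rewrite ler_pdivrMr.
have -> : [set r | exists x : V, x != 0 /\ r = `|f x| / hnorm ip x] = set0.
  by apply/eqP; apply/negPn/negP => /set0P.
by rewrite sup0.
Qed.

Lemma dual_bound (R : realType) (V : lmodType R) (ip : V -> V -> R) (f : V -> R) :
  is_inner_product ip -> bounded_linear_functional ip f ->
  forall x, `|f x| <= dual_norm ip f * hnorm ip x.
Proof.
move=> H Bf x.
have [->|nx] := eqVneq x 0.
  by rewrite (blf0 Bf) normr0 /hnorm (ip0l H) sqrtr0 mulr0.
have np := hnorm_gt0 H nx.
rewrite -ler_pdivrMr //.
case: Bf => _ [C HC].
apply: ub_le_sup; last by exists x.
exists C => r [z [nz ->]].
by rewrite ler_pdivrMr ?hnorm_gt0.
Qed.
Lemma fD (R : realType) (V : lmodType R) (ip : V -> V -> R) (f : V -> R) :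
  bounded_linear_functional ip f -> forall x y, f (x + y) = f x + f y.
Proof. by move=> [L _] x y; have := L 1 x y; rewrite scale1r mul1r. Qed.

Lemma fZ (R : realType) (V : lmodType R) (ip : V -> V -> R) (f : V -> R) :
  bounded_linear_functional ip f -> forall a x, f (a *: x) = a * f x.
Proof.
move=> Bf a x; have := Bf.1 a x 0; rewrite addr0 (blf0 Bf) addr0 //.
Qed.

Lemma fB (R : realType) (V : lmodType R) (ip : V -> V -> R) (f : V -> R) :
  bounded_linear_functional ip f -> forall x y, f (x - y) = f x - f y.
Proof.
by move=> Bf x y; rewrite (fD Bf) -scaleN1r (fZ Bf) mulN1r.
Qed.

Lemma eps_small (R : realType) (e : R) : 0 < e ->
  exists K : nat, forall k, (K <= k)%N -> (k.+1%:R)^-1 < e.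
Proof.
move=> e0; exists (Num.trunc (e^-1)) => k Kk.
have h1 := truncnS_gt (e^-1).
have h2 : ((Num.trunc e^-1).+1%:R : R) <= k.+1%:R by rewrite ler_nat ltnS.
have h3 : e^-1 < k.+1%:R by apply: lt_le_trans h2.
rewrite -div1r ltr_pdivrMr ?ltr0Sn //.
by move: h3; rewrite -div1r ltr_pdivrMr // mulrC.
Qed.

Lemma hnorm_lt (R : realType) (V : lmodType R) (ip : V -> V -> R) x e :
  0 < e -> ip x x < e ^+ 2 -> hnorm ip x < e.
Proof.
move=> e0 h; rewrite /hnorm -(ger0_norm (ltW e0)) -sqrtr_sqr ltr_sqrt //.
by rewrite exprn_gt0.
Qed.
Definition epsn (R : realType) (k : nat) : R := (k.+1%:R)^-1.

Lemma riesz (R : realType) (V : lmodType R) (ip : V -> V -> R) :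
  is_hilbert ip -> forall f, bounded_linear_functional ip f ->
  exists r, forall x, f x = ip r x.
Proof.
move=> [H Hc] f Bf.
have [[v fv]|nf] := pselect (exists v, f v != 0); last first.
  exists 0 => x; rewrite ip0l //; apply/eqP; apply/negPn/negP => fx.
  by apply: nf; exists x.
pose S := [set t | exists n, f n = 0 /\ t = ip (v - n) (v - n)].
have S0 : S (ip v v) by exists 0; rewrite (blf0 Bf) subr0.
have Slb : has_lbound S by exists 0 => t [n [_ ->]]; apply: ipxx_ge0.
have hinf : has_inf S by split; [exists (ip v v)|].
pose d := inf S.
have lbS : forall n, f n = 0 -> d <= ip (v - n) (v - n).
  by move=> n fn; apply: ge_inf Slb _ _; exists n.
have adh : forall k : nat, exists n, f n = 0 /\ ip (v - n) (v - n) < d + epsn R k.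
  move=> k; have ek : 0 < (k.+1%:R : R)^-1 by rewrite invr_gt0 ltr0Sn.
  have [t [n [fn ->]] ht] := inf_adherent ek hinf.
  rewrite -/(epsn R k) in ht.
  by exists n.
case: (choice adh) => nk Hnk.
have cauchy : forall m k, ip (nk m - nk k) (nk m - nk k) <=
    2 * epsn R m + 2 * epsn R k.
  move=> m k.
  have fmid : f (2^-1 *: (nk m + nk k)) = 0.
    by rewrite (fZ Bf) (fD Bf) (Hnk m).1 (Hnk k).1 addr0 mulr0.
  have h1 := lbS _ fmid.
  have h2 := (Hnk m).2; have h3 := (Hnk k).2.
  rewrite !(ipDl H, ipDr H, ipNl H, ipNr H, ipZl H, ipZr H) in h1 h2 h3 *.
  rewrite ?(ipC H (nk m) v) ?(ipC H (nk k) v) ?(ipC H (nk k) (nk m)) in h1 h2 h3 *.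
  lra.
have [l Hl] : exists l, forall e : R, 0 < e -> exists N : nat, forall n : nat,
    (N <= n)%N -> hnorm ip (nk n - l) < e.
  apply: Hc => e e0.
  have e4 : 0 < e ^+ 2 / 4 by rewrite divr_gt0 ?exprn_gt0.
  have [K HK] := eps_small e4.
  exists K => m n Km Kn; apply: hnorm_lt => //.
  apply: le_lt_trans (cauchy m n) _.
  have h1 : epsn R m < e ^+ 2 / 4 := HK _ Km.
  have h2 : epsn R n < e ^+ 2 / 4 := HK _ Kn.
  lra.
have Lk : forall n, f (nk n - l) = - f l.
  by move=> n; rewrite (fB Bf) (Hnk n).1 sub0r.
have fl : f l = 0.
  case: (Bf) => _ [C HC].
  apply/eqP; rewrite -normr_eq0 eq_le normr_ge0 andbT.
  apply/ler_addgt0Pr => e e0; rewrite add0r.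
  have Cp : 0 < `|C| + 1 by rewrite ltr_pwDr ?normr_ge0.
  have [N HN] := Hl (e / (`|C| + 1)) (divr_gt0 e0 Cp).
  have h1 := HN N (leqnn N).
  have h2 := HC (nk N - l); rewrite Lk normrN in h2.
  have h3 := hnorm_ge0 ip (nk N - l).
  have h4 : C * hnorm ip (nk N - l) <= (`|C| + 1) * hnorm ip (nk N - l).
    by apply: ler_wpM2r => //; rewrite (le_trans (ler_norm C)) // lerDl.
  have h5 : (`|C| + 1) * hnorm ip (nk N - l) <= e.
    by rewrite mulrC -ler_pdivlMr // ltW.
  lra.
have eps_le1 : forall k, epsn R k <= 1 by move=> k; rewrite /epsn invf_le1 ?ler1n ?ltr0Sn.
have eps_ge0 : forall k, 0 <= epsn R k by move=> k; rewrite /epsn invr_ge0 ler0n.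
have dv : d <= ip v v by have := lbS 0 (blf0 Bf); rewrite subr0.
have d0 : 0 <= d by apply: lb_le_inf; [exists (ip v v) | move=> t [n [_ ->]]; apply: ipxx_ge0].
have vl : ip (v - l) (v - l) <= d.
  apply/ler_addgt0Pr => e e0.
  have vv0 := ipxx_ge0 H v.
  have B1p : 0 < 3 * (2 * (ip v v + 2) + 1) by lra.
  have e3 : 0 < e / 3 by rewrite divr_gt0.
  have [K HK] := eps_small e3.
  have [N1 HN1] := Hl 1 ltr01.
  have [N2 HN2] := Hl (e / (3 * (2 * (ip v v + 2) + 1))) (divr_gt0 e0 B1p).
  pose n := maxn (maxn N1 N2) K.
  have hK : epsn R n < e / 3 := HK n (leq_maxr _ _).
  have hD1 := HN1 n (leq_trans (leq_maxl _ _) (leq_maxl _ _)).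
  have hD2 := HN2 n (leq_trans (leq_maxr _ _) (leq_maxl _ _)).
  have hA := (Hnk n).2.
  have eq1 : v - l = (v - nk n) + (nk n - l) by rewrite addrA subrK.
  have tri := hnormD H (v - nk n) (nk n - l); rewrite -eq1 in tri.
  rewrite -(hnorm_sq H (v - l)).
  rewrite -(hnorm_sq H) in hA.
  set A := hnorm ip (v - nk n) in tri hA.
  set D := hnorm ip (nk n - l) in tri hD1 hD2.
  set hv := hnorm ip (v - l) in tri *.
  have A0 : 0 <= A := hnorm_ge0 _ _.
  have D0 : 0 <= D := hnorm_ge0 _ _.
  have hv0 : 0 <= hv := hnorm_ge0 _ _.
  have en1 := eps_le1 n.
  have AB : A <= ip v v + 2 by nra.
  have hD3 : D * (3 * (2 * (ip v v + 2) + 1)) < e.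
    by rewrite -ltr_pdivlMr.
  have sq : hv * hv <= (A + D) * (A + D) by apply: ler_pM.
  have AD : A * D <= (ip v v + 2) * D by apply: ler_wpM2r.
  have DD : D * D <= D by rewrite ler_piMl // ltW.
  nra.
have orth : forall w, f w = 0 -> ip (v - l) w = 0.
  move=> w fw.
  have key : forall t, 0 <= t * t * ip w w - 2 * t * ip (v - l) w.
    move=> t.
    have ft : f (l + t *: w) = 0 by rewrite (fD Bf) (fZ Bf) fl fw mulr0 addr0.
    have := lbS _ ft.
    have -> : v - (l + t *: w) = (v - l) - t *: w by rewrite opprD addrA.
    move: vl; rewrite !(ipDl H, ipDr H, ipNl H, ipNr H, ipZl H, ipZr H) ?(ipC H w v) ?(ipC H w l) ?(ipC H l v).
    lra.
  have W0 := ipxx_ge0 H w.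
  set b := ip (v - l) w in key *; set W := ip w w in key W0.
  have W1 : W + 1 != 0 by rewrite gt_eqF // ltr_pwDr.
  have := key (b / (W + 1)).
  have -> : b / (W + 1) * (b / (W + 1)) * W - 2 * (b / (W + 1)) * b =
     - (b ^+ 2 * (W + 2)) / (W + 1) ^+ 2 by field.
  rewrite pmulr_lge0 ?invr_gt0 ?exprn_gt0 ?ltr_pwDr // oppr_ge0.
  move=> hb; apply/eqP; rewrite -sqrf_eq0 eq_le sqr_ge0 andbT.
  by rewrite -(pmulr_lle0 _ (_ : 0 < W + 2)) // ltr_pwDr.
pose u := v - l.
have fu : f u = f v by rewrite (fB Bf) fl subr0.
have fu0 : f u != 0 by rewrite fu.
have uu0 : ip u u != 0.
  apply/eqP => E; move: fu0; case: (H) => _ _ _ D0; rewrite (D0 _ E) (blf0 Bf) eqxx.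
  by [].
exists ((f u / ip u u) *: u) => x.
have fw : f (x - (f x / f u) *: u) = 0.
  by rewrite (fB Bf) (fZ Bf) divfK // subrr.
have := orth _ fw; rewrite -/u (ipBr H) (ipZr H) (ipZl H) => E.
have E2 : ip u x = f x / f u * ip u u by apply/eqP; rewrite -subr_eq0 E.
rewrite E2; field.
by rewrite fu0 uu0.
Qed.
Lemma hnormN (R : realType) (V : lmodType R) (ip : V -> V -> R) :
  is_inner_product ip -> forall x, hnorm ip (- x) = hnorm ip x.
Proof. by move=> H x; rewrite /hnorm (ipNl H) (ipNr H) opprK. Qed.

Lemma hnormB (R : realType) (V : lmodType R) (ip : V -> V -> R) :
  is_inner_product ip -> forall x y, hnorm ip (x - y) <= hnorm ip x + hnorm ip y.
Proof. by move=> H x y; rewrite -(hnormN H y); apply: hnormD. Qed.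

Lemma sup_le_gen (R : realType) (E : set R) (M : R) :
  (forall r, E r -> r <= M) -> 0 <= M -> sup E <= M.
Proof.
move=> HE M0.
have [ne|e] := pselect (E !=set0); first exact: ge_sup.
have -> : E = set0 by apply/eqP; apply/negPn/negP => /set0P.
by rewrite sup0.
Qed.

Lemma dual_norm_ge0 (R : realType) (V : lmodType R) (ip : V -> V -> R) (f : V -> R) :
  is_inner_product ip -> bounded_linear_functional ip f -> 0 <= dual_norm ip f.
Proof.
move=> H Bf; rewrite /dual_norm.
have [[r0 [x [nx _]]]|e] := pselect ([set r | exists x : V, x != 0 /\ r = `|f x| / hnorm ip x] !=set0).
  apply: le_trans (_ : `|f x| / hnorm ip x <= _).
    by rewrite divr_ge0 ?hnorm_ge0.
  case: Bf => _ [C HC].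
  apply: ub_le_sup; last by exists x.
  exists C => r [z [nz ->]].
  by rewrite ler_pdivrMr ?hnorm_gt0.
have -> : [set r | exists x : V, x != 0 /\ r = `|f x| / hnorm ip x] = set0.
  by apply/eqP; apply/negPn/negP => /set0P.
by rewrite sup0.
Qed.

Lemma sq_le (R : realType) (x b : R) : 0 <= x -> 0 <= b -> x ^+ 2 <= b ^+ 2 -> x <= b.
Proof. by move=> x0 b0; rewrite ler_pXn2r. Qed.

Lemma sq_le_k (R : realType) (x y k : R) : 0 <= x -> 0 <= y -> 0 <= k ->
  x ^+ 2 <= k * y ^+ 2 -> x <= (k + 1) * y.
Proof.
move=> x0 y0 k0 h; apply: sq_le => //; first by rewrite mulr_ge0 // addr_ge0.
apply: le_trans h _; rewrite exprMn ler_wpM2r ?exprn_ge0 //.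
nra.
Qed.

Lemma adjoint_exists (R : realType) (X Y : lmodType R) (ipX : X -> X -> R)
  (ipY : Y -> Y -> R) (B : Y -> X -> R) (phi : Y -> R) (Cp : R) :
  is_hilbert ipX -> is_inner_product ipY -> bounded_iso_to_dual ipY ipX B ->
  (forall a y z, phi (a *: y + z) = a * phi y + phi z) -> 0 <= Cp ->
  (forall y, `|phi y| <= Cp * hnorm ipY y) ->
  exists x, forall y, B y x = phi y.
Proof.
move=> HX HY [[Bb Bl] [CB HCB] [cB [cB0 HcB]] Binj Bsurj] phil Cp0 phib.
have HXi := HX.1.
have ipblf : forall x', bounded_linear_functional ipX (ipX x').
  move=> x'; split; first by move=> a x y; rewrite (ipDr HXi) (ipZr HXi).
  by exists (hnorm ipX x') => x; apply: (CS HXi).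
have ex : forall x', exists y, B y = ipX x'.
  move=> x'; have [y Hy] := Bsurj _ (ipblf x'); exists y.
  by apply: funext => x; rewrite Hy.
case: (choice ex) => T HT.
have Tlin : forall a x1 x2, T (a *: x1 + x2) = a *: T x1 + T x2.
  move=> a x1 x2; apply: Binj; apply: funext => x.
  by rewrite Bl !HT (ipDl HXi) (ipZl HXi).
have Tb : forall x', hnorm ipY (T x') <= cB^-1 * hnorm ipX x'.
  move=> x'; rewrite mulrC ler_pdivlMr // mulrC.
  apply: le_trans (HcB _) _; rewrite HT.
  apply: dual_norm_le; first exact: hnorm_ge0.
  by move=> x; apply: (CS HXi).
pose psi x' := phi (T x').
have psiblf : bounded_linear_functional ipX psi.
  split; first by move=> a x y; rewrite /psi Tlin phil.
  exists (Cp * cB^-1) => x; rewrite /psi -mulrA.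
  by apply: le_trans (phib _) _; rewrite ler_wpM2l.
have [x Hx] := riesz HX psiblf.
exists x => y.
have [r Hr] := riesz HX (Bb y).
have Tr : T r = y.
  apply: Binj; apply: funext => z; by rewrite HT Hr.
by rewrite Hr (ipC HXi) -Hx /psi Tr.
Qed.
Lemma lin_sub (R : realType) (V W : lmodType R) (g : V -> W) :
  (forall a x y, g (a *: x + y) = a *: g x + g y) -> forall x y, g (x - y) = g x - g y.
Proof.
move=> L x y; have := L (-1) y x; rewrite !scaleN1r addrC => ->; by rewrite addrC.
Qed.

Lemma lin_subR (R : realType) (V : lmodType R) (g : V -> R) :
  (forall a x y, g (a *: x + y) = a * g x + g y) -> forall x y, g (x - y) = g x - g y.
Proof.
move=> L x y; have := L (-1) y x; rewrite scaleN1r mulN1r addrC => ->; by rewrite addrC.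
Qed.

Lemma sq_le_prod (R : realType) (a b : R) : 0 <= a -> 0 <= b -> a ^+ 2 <= a * b -> a <= b.
Proof.
move=> a0 b0 h; case: (leP a b) => // ab.
have : a * b < a * a by rewrite ltr_pM2l // (le_lt_trans b0 ab).
by rewrite -expr2 => /(le_lt_trans h); rewrite ltxx.
Qed.

Theorem mainTheorem5 (R : realType)
  (X HX Y HY : lmodType R)
  (ipX : X -> X -> R) (ipHX : HX -> HX -> R) (iX : X -> HX)
  (ipY : Y -> Y -> R) (ipHY : HY -> HY -> R) (iY : Y -> HY)
  (B : Y -> X -> R) (d : Y -> Y -> R)
  (h0 alpha c1 c2 cS cPi : R)
  (Yh : R -> set Y) (Ph : R -> Y -> Y)
  (Uh : R -> set (X -> R)) (Xh : R -> set X) (Pih : R -> X -> X) :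
  gelfand_triple ipX ipHX iX ->
  gelfand_triple ipY ipHY iY ->
  bounded_iso_to_dual ipY ipX B ->
  sym_elliptic_form ipY d ->
  0 < h0 -> 0 < alpha -> 0 < c1 -> 0 < c2 -> 0 < cS -> 0 < cPi ->
  (* discretization of Y *)
  (forall h, 0 < h <= h0 ->
     (exists n, subspace_dim (Yh h) n) /\
     forall y, Yh h (Ph h y) /\
       hnorm ipHY (iY (y - Ph h y)) <= c1 * h `^ alpha * Dnorm d y /\
       Dnorm d (y - Ph h y) <= c2 * Dnorm d y) ->
  (* U_h ⊂ X^*, X_h ⊂ X, equal dimensions, discrete inf-sup *)
  (forall h, 0 < h <= h0 ->
     [/\ (forall u, Uh h u -> bounded_linear_functional ipX u),
         (exists n, fun_subspace_dim (Uh h) n /\ subspace_dim (Xh h) n) &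
         (forall u, Uh h u ->
            cS * dual_norm ipX u <=
            sup [set r | exists xh, Xh h xh /\ xh != 0 /\
                                    r = u xh / hnorm ipX xh])]) ->
  (* the maps Pi_h *)
  (forall h, 0 < h <= h0 -> forall x,
     Xh h (Pih h x) /\
     forall g : HY, (forall y, B y x = ipHY g (iY y)) ->
       hnorm ipX (x - Pih h x) <= cPi * h `^ alpha * hnorm ipHY g) ->
  exists c : R, 0 < c /\
    forall h, 0 < h <= h0 ->
    forall (ybar : HY) (yrh : Y) (ut : X -> R) (yt : Y),
      let rho := h `^ (2 * alpha) in
      (* Galerkin solution y_{rho h} *)
      Yh h yrh ->
      (forall yh, Yh h yh ->
         ipHY (iY yrh) (iY yh) + rho * d yrh yh = ipHY ybar (iY yh)) ->
      (* u~_{rho h} in U_h *)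
      Uh h ut ->
      (forall xh, Xh h xh -> ut xh = B yrh xh) ->
      (* y~_rho = B^{-1} u~_{rho h} *)
      (forall x, B yt x = ut x) ->
      hnorm ipHY (iY yt - ybar) <= c * hnorm ipHY ybar /\
      (forall z : Y, ybar = iY z ->
         hnorm ipHY (iY yt - ybar) <= c * h `^ alpha * hnorm ipY z).
Proof.
move=> [[HXh _] _ _ _ _] [[[HYi _] [HHi _]] iYl _ [CE HCE] _]
  [[Bb Bl] [CB HCB] [cB [cB0 HcB]] Binj Bsurj] [dl dsym [Cd HCd] [ce [ce0 Hce]]]
  h00 al0 c10 c20 cS0 cPi0 HYh HUh HPi.
have HXi := HXh.1.
have Hd : is_inner_product d.
  split; [exact: dsym | exact: dl | | ].
    move=> x; apply: le_trans (Hce x); rewrite mulr_ge0 ?exprn_ge0 ?hnorm_ge0 //.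
    exact: ltW.
  move=> x dx; apply: (hnorm0 HYi).
  have := Hce x; rewrite dx => h1.
  have h2 : hnorm ipY x ^+ 2 <= 0 by rewrite -(pmulr_rle0 _ ce0).
  by apply/eqP; rewrite -sqrf_eq0 eq_le h2 sqr_ge0.
pose CB' := `|CB| + 1.
have CB'0 : 0 < CB' by rewrite ltr_pwDr ?normr_ge0.
have HCB' : forall y, dual_norm ipX (B y) <= CB' * hnorm ipY y.
  move=> y; apply: le_trans (HCB y) _; apply: ler_wpM2r; first exact: hnorm_ge0.
  by rewrite (le_trans (ler_norm CB)) // lerDl.
pose CE' := `|CE| + 1.
have CE'0 : 0 < CE' by rewrite ltr_pwDr ?normr_ge0.
have HCE' : forall y, hnorm ipHY (iY y) <= CE' * hnorm ipY y.
  move=> y; apply: le_trans (HCE y) _; apply: ler_wpM2r; first exact: hnorm_ge0.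
  by rewrite (le_trans (ler_norm CE)) // lerDl.
pose Cd' := `|Cd| + 1.
have Cd'0 : 0 < Cd' by rewrite ltr_pwDr ?normr_ge0.
have HCd' : forall y, d y y <= Cd' * hnorm ipY y ^+ 2.
  move=> y; apply: le_trans (ler_norm _) _; apply: le_trans (HCd y y) _.
  rewrite -mulrA -expr2; apply: ler_wpM2r; first by rewrite exprn_ge0 ?hnorm_ge0.
  by rewrite (le_trans (ler_norm Cd)) // lerDl.
pose K := CB' / (cB * cS).
have K0 : 0 <= K by rewrite divr_ge0 ?mulr_ge0 // ltW.
pose k := ce^-1.
have k0 : 0 <= k by rewrite invr_ge0 ltW.
pose Ma := CB' * cPi * (K + 1) * (k + 1) + 2.
pose M := c1 ^+ 2 / 2 + (c2 + 1) ^+ 2 / 2 + c2.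
have M0 : 0 <= M by rewrite /M; nra.
pose K1 := 2 * M + 1.
pose Mb := (CB' * cPi * (K + 1) * (k + 1) * (K1 + 1) + K1) * (Cd' + 1).
have t0 : 0 <= CB' * cPi * (K + 1) * (k + 1).
  apply: mulr_ge0; last lra; apply: mulr_ge0; last lra.
  apply: mulr_ge0; lra.
have Ma0 : 0 < Ma by rewrite /Ma; lra.
have K10 : 0 <= K1 by rewrite /K1; lra.
have Mb0 : 0 <= Mb.
  have t1 : 0 <= CB' * cPi * (K + 1) * (k + 1) * (K1 + 1).
    apply: mulr_ge0; lra.
  rewrite /Mb; apply: mulr_ge0; lra.
exists (Ma + Mb); split; first by rewrite ltr_pwDl.
move=> h hh ybar yrh ut yt rho Yr Gal Uu Uxh Byt.
have h0p : 0 < h by case/andP: hh.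
pose s := h `^ alpha.
have s0 : 0 < s by rewrite /s powR_gt0.
have rhoE : rho = s ^+ 2.
  by rewrite /rho /s mulrC powRrM powR_mulrn ?powR_ge0 // ltW.
have [Hub Hdim Hinf] := HUh h hh.
have Bsub := fun x => lin_subR (fun a y z => Bl a y z x).
have iYsub := lin_sub iYl.
have F1 : hnorm ipY yt <= K * hnorm ipY yrh.
  have Bu : B yt = ut by apply: funext.
  have e1 := HcB yt; rewrite Bu in e1.
  have e2 := Hinf _ Uu.
  have e3 : sup [set r | exists xh, Xh h xh /\ xh != 0 /\ r = ut xh / hnorm ipX xh]
      <= dual_norm ipX (B yrh).
    apply: sup_le_gen; last exact: dual_norm_ge0 HXi (Bb yrh).
    move=> r [xh [Xxh [nx ->]]]; rewrite Uxh //.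
    rewrite ler_pdivrMr ?(hnorm_gt0 HXi) //.
    exact: le_trans (ler_norm _) (dual_bound HXi (Bb yrh) xh).
  have e4 := HCB' yrh.
  rewrite /K mulrAC ler_pdivlMr ?mulr_gt0 //.
  have := hnorm_ge0 ipY yt => yt0.
  nra.
pose w := yt - yrh.
have F2 : hnorm ipHY (iY w) <= CB' * cPi * (K + 1) * s * hnorm ipY yrh.
  pose phi y := ipHY (iY w) (iY y).
  have phil : forall a y z, phi (a *: y + z) = a * phi y + phi z.
    by move=> a y z; rewrite /phi iYl (ipDr HHi) (ipZr HHi).
  have Cp0 : 0 <= hnorm ipHY (iY w) * CE' by rewrite mulr_ge0 ?hnorm_ge0 // ltW.
  have phib : forall y, `|phi y| <= hnorm ipHY (iY w) * CE' * hnorm ipY y.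
    move=> y; apply: le_trans (CS HHi _ _) _; rewrite -mulrA.
    by apply: ler_wpM2l; [exact: hnorm_ge0 | exact: HCE'].
  have [x Hx] := adjoint_exists HXh HYi (And5 (conj Bb Bl) (ex_intro _ CB HCB)
     (ex_intro _ cB (conj cB0 HcB)) Binj Bsurj) phil Cp0 phib.
  have [XP HP] := HPi h hh x.
  have e1 := HP (iY w) Hx.
  have Bw0 : B w (Pih h x) = 0 by rewrite /w Bsub Byt Uxh // subrr.
  have e2 : hnorm ipHY (iY w) ^+ 2 = B w (x - Pih h x).
    by rewrite (fB (Bb w)) Bw0 subr0 Hx (hnorm_sq HHi).
  have e3 := le_trans (ler_norm _) (dual_bound HXi (Bb w) (x - Pih h x)).
  rewrite -e2 in e3.
  have e4 := HCB' w.
  have e5 : hnorm ipY w <= (K + 1) * hnorm ipY yrh.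
    by apply: le_trans (hnormB HYi _ _) _; lra.
  have n1 := hnorm_ge0 ipHY (iY w).
  have n2 := hnorm_ge0 ipX (x - Pih h x).
  have n3 := hnorm_ge0 ipY w.
  have n4 := dual_norm_ge0 HXi (Bb w).
  apply: sq_le_prod => //.
    by rewrite !mulr_ge0 ?addr_ge0 ?hnorm_ge0 // ltW.
  apply: le_trans e3 _.
  have f1 : dual_norm ipX (B w) * hnorm ipX (x - Pih h x) <=
      (CB' * hnorm ipY w) * (cPi * s * hnorm ipHY (iY w)).
    by apply: ler_pM.
  apply: le_trans f1 _.
  have f2 : CB' * hnorm ipY w <= CB' * ((K + 1) * hnorm ipY yrh) by rewrite ler_pM2l.
  have : CB' * hnorm ipY w * (cPi * s * hnorm ipHY (iY w)) <=
     CB' * ((K + 1) * hnorm ipY yrh) * (cPi * s * hnorm ipHY (iY w)).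
    by apply: ler_wpM2r => //; rewrite !mulr_ge0 // ltW.
  move/le_trans; apply; rewrite le_eqVlt; apply/orP; left; apply/eqP; ring.
have F3 : hnorm ipHY (iY yt - ybar) <= hnorm ipHY (iY w) + hnorm ipHY (iY yrh - ybar).
  have -> : iY yt - ybar = iY w + (iY yrh - ybar) by rewrite /w iYsub addrA subrK.
  exact: hnormD.
have t0' : 0 <= CB' * cPi * (K + 1) by rewrite !mulr_ge0 // ?addr_ge0 // ltW.
have yrh0 := hnorm_ge0 ipY yrh.
split.
  have G := Gal _ Yr; rewrite rhoE -(hnorm_sq HHi) in G.
  have cs := le_trans (ler_norm _) (CS HHi ybar (iY yrh)).
  set P := hnorm ipHY (iY yrh) in G cs.
  set Yb := hnorm ipHY ybar in cs *.
  have P0 : 0 <= P := hnorm_ge0 _ _.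
  have Yb0 : 0 <= Yb := hnorm_ge0 _ _.
  have dd := Hce yrh.
  have dd0 : 0 <= ce * hnorm ipY yrh ^+ 2 by rewrite mulr_ge0 ?exprn_ge0 // ltW.
  have sdd : 0 <= s ^+ 2 * d yrh yrh.
    by rewrite mulr_ge0 ?exprn_ge0 ?(le_trans dd0 dd) // ltW.
  have PY : P <= Yb by apply: sq_le_prod => //; rewrite mulrC; lra.
  have H1 : ce * (s * hnorm ipY yrh) ^+ 2 <= Yb ^+ 2.
    have : s ^+ 2 * (ce * hnorm ipY yrh ^+ 2) <= s ^+ 2 * d yrh yrh.
      by rewrite ler_wpM2l ?exprn_ge0 // ltW.
    rewrite exprMn; nra.
  have H2 : (s * hnorm ipY yrh) ^+ 2 <= k * Yb ^+ 2.
    by rewrite [k * _]mulrC /k ler_pdivlMr // mulrC.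
  have H3 := sq_le_k (mulr_ge0 (ltW s0) yrh0) Yb0 k0 H2.
  have H4 : hnorm ipHY (iY yrh - ybar) <= 2 * Yb.
    by apply: le_trans (hnormB HHi _ _) _; rewrite -/P -/Yb; lra.
  have H5 : CB' * cPi * (K + 1) * s * hnorm ipY yrh <= CB' * cPi * (K + 1) * ((k + 1) * Yb).
    by rewrite -mulrA ler_wpM2l.
  have H6 : Ma * Yb <= (Ma + Mb) * Yb by rewrite ler_wpM2r // lerDl.
  apply: le_trans H6; rewrite /Ma.
  have E : (CB' * cPi * (K + 1) * (k + 1) + 2) * Yb =
     CB' * cPi * (K + 1) * ((k + 1) * Yb) + 2 * Yb by ring.
  rewrite E; lra.
move=> z ybz; subst ybar.
have [_ HP] := HYh h hh.
have [YP [HQh HQd]] := HP z.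
set Pz := Ph h z in YP HQh HQd.
have E1 := Gal _ Yr; have E2 := Gal _ YP; rewrite rhoE in E1 E2.
pose e := yrh - z; pose q := z - Pz.
have iden : hnorm ipHY (iY e) ^+ 2 + s ^+ 2 * hnorm d e ^+ 2 =
    - ipHY (iY e) (iY q) - s ^+ 2 * (d e q + d z e + d z q).
  rewrite !(hnorm_sq HHi) !(hnorm_sq Hd) /e /q !iYsub.
  rewrite !(ipDl HHi, ipDr HHi, ipNl HHi, ipNr HHi, ipDl Hd, ipDr Hd, ipNl Hd, ipNr Hd).
  rewrite ?(ipC HHi (iY z) (iY yrh)) ?(ipC HHi (iY Pz) (iY yrh)) ?(ipC HHi (iY Pz) (iY z)).
  rewrite ?(dsym z yrh) ?(dsym Pz yrh) ?(dsym Pz z).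
  rewrite ?(ipC HHi (iY z) (iY yrh)) ?(ipC HHi (iY Pz) (iY yrh)) ?(ipC HHi (iY Pz) (iY z)) in E1 E2.
  lra.
have cs1 := CS HHi (iY e) (iY q).
have cs2 := CS Hd e q.
have cs3 := CS Hd z e.
have cs4 := CS Hd z q.
change (is_true (hnorm d q <= c2 * hnorm d z)) in HQd.
change (is_true (hnorm ipHY (iY q) <= c1 * s * hnorm d z)) in HQh.
move: iden cs1 cs2 cs3 cs4 HQh HQd.
set A := hnorm ipHY (iY e); set Qh := hnorm ipHY (iY q); set E := hnorm d e.
set Qd := hnorm d q; set Z := hnorm d z.
move=> iden cs1 cs2 cs3 cs4 HQh HQd.
have A0 : 0 <= A := hnorm_ge0 _ _.
have Qh0 : 0 <= Qh := hnorm_ge0 _ _.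
have E0 : 0 <= E := hnorm_ge0 _ _.
have Qd0 : 0 <= Qd := hnorm_ge0 _ _.
have Z0 : 0 <= Z := hnorm_ge0 _ _.
have s2 : 0 < s ^+ 2 by rewrite exprn_gt0.
have i1 : A ^+ 2 + s ^+ 2 * E ^+ 2 <=
    A * (c1 * s * Z) + s ^+ 2 * (E * (c2 * Z) + Z * E + Z * (c2 * Z)).
  have j1 : A * Qh <= A * (c1 * s * Z) by rewrite ler_wpM2l.
  have j2 : E * Qd <= E * (c2 * Z) by rewrite ler_wpM2l.
  have j3 : Z * Qd <= Z * (c2 * Z) by rewrite ler_wpM2l.
  have j4 : - (d e q + d z e + d z q) <= E * (c2 * Z) + Z * E + Z * (c2 * Z).
    move: cs2 cs3 cs4; rewrite !ler_norml => /andP[? ?] /andP[? ?] /andP[? ?]; lra.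
  have j5 : s ^+ 2 * (- (d e q + d z e + d z q)) <=
      s ^+ 2 * (E * (c2 * Z) + Z * E + Z * (c2 * Z)) by rewrite ler_wpM2l // ltW.
  move: cs1; rewrite ler_norml => /andP[? ?]; lra.
have i2 : A ^+ 2 / 2 + s ^+ 2 * E ^+ 2 / 2 <= M * (s * Z) ^+ 2.
  have k1 : 0 <= (A - c1 * s * Z) ^+ 2 := sqr_ge0 _.
  have k2 : 0 <= s ^+ 2 * (E - (c2 + 1) * Z) ^+ 2 by rewrite mulr_ge0 ?sqr_ge0 // ltW.
  rewrite /M; nra.
have sE : 0 <= s ^+ 2 * E ^+ 2 by rewrite mulr_ge0 ?sqr_ge0 // ltW.
have hA : A <= K1 * (s * Z).
  apply: sq_le_k => //; first by rewrite mulr_ge0 // ltW.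
    lra.
  lra.
have hE : E <= K1 * Z.
  apply: sq_le_k => //; first lra.
  have : s ^+ 2 * E ^+ 2 <= s ^+ 2 * (2 * M * Z ^+ 2) by rewrite exprMn in i2; nra.
  by rewrite ler_pM2l.
have hD : hnorm d yrh <= (K1 + 1) * Z.
  have -> : yrh = e + z by rewrite /e subrK.
  by apply: le_trans (hnormD Hd _ _) _; rewrite -/E -/Z; lra.
have hY : hnorm ipY yrh <= (k + 1) * ((K1 + 1) * Z).
  apply: sq_le_k => //.
    by rewrite mulr_ge0 // addr_ge0.
  rewrite [k * _]mulrC /k ler_pdivlMr // mulrC.
  apply: le_trans (Hce yrh) _.
  have hD0 := hnorm_ge0 d yrh.
  rewrite -(hnorm_sq Hd).
  by rewrite ler_pXn2r // ?nnegrE // mulr_ge0 // addr_ge0.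
have hZ : Z <= Cd' * hnorm ipY z + hnorm ipY z.
  have := @sq_le_k R Z (hnorm ipY z) Cd' Z0 (hnorm_ge0 _ _) (ltW Cd'0).
  rewrite /Z (hnorm_sq Hd) => /(_ (HCd' z)); lra.
have F3' : hnorm ipHY (iY yt - iY z) <= hnorm ipHY (iY w) + A.
  have eqe : iY yrh - iY z = iY e by rewrite /e iYsub.
  by rewrite eqe in F3; exact: F3.
have zz := hnorm_ge0 ipY z.
have G1 : hnorm ipHY (iY w) <= CB' * cPi * (K + 1) * s * ((k + 1) * ((K1 + 1) * Z)).
  apply: le_trans F2 _; rewrite ler_wpM2l //; rewrite mulr_ge0 // ltW //.
have G2 : Z <= (Cd' + 1) * hnorm ipY z by lra.
have s0' := ltW s0.
have G3 : CB' * cPi * (K + 1) * s * ((k + 1) * ((K1 + 1) * Z)) <=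
   CB' * cPi * (K + 1) * s * ((k + 1) * ((K1 + 1) * ((Cd' + 1) * hnorm ipY z))).
  apply: ler_wpM2l; first by rewrite mulr_ge0.
  apply: ler_wpM2l; first lra.
  apply: ler_wpM2l; first lra.
  exact: G2.
have G4 : K1 * (s * Z) <= K1 * (s * ((Cd' + 1) * hnorm ipY z)).
  by rewrite ler_wpM2l // ler_wpM2l.
have hM : Mb <= Ma + Mb by rewrite -subr_ge0 addrK ltW.
have G5 : Mb * (s * hnorm ipY z) <= (Ma + Mb) * (s * hnorm ipY z).
  by rewrite -subr_ge0 -mulrBl addrK mulr_ge0 ?mulr_ge0 // ltW.
rewrite -mulrA; apply: le_trans G5.
apply: le_trans F3' _.
have G6 := lerD (le_trans G1 G3) (le_trans hA G4).
apply: le_trans G6 _.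
rewrite le_eqVlt; apply/orP; left; apply/eqP; rewrite /Mb; ring.
Qed.
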